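(* Absorption fails on the strict face of the cube: (i) applicative order $SSS$ absorbs none of $ISI$, call-by-value $ISS$, head applicative order $SSI$, i.e. $SSS\circ st\neq SSS$ for each $st\in\{ISI,ISS,SSI\}$ (witness $(\lambda x.y)(\lambda k.k\,\Omega)$); (ii) $ISS\circ ISI\neq ISS$ (witness $(\lambda x.y)(x\,\Omega)$); (iii) $SSI\circ ISI\neq SSI$ (witness $(\lambda x.y)(\lambda x.\Omega)$). Here $\Omega=(\lambda x.xx)(\lambda x.xx)$.
   Context: Terms: $\Lambda ::= x\mid\lambda x.\Lambda\mid\Lambda\Lambda$; $[N/x]B$ is capture-avoiding substitution. An evaluator is a partial function $\Lambda\rightharpoonup\Lambda$ defined by inference rules, undefined (divergent) where no finite derivation exists; $\mathrm{id}$ is the identity; composition is undefined where the inner evaluator is. Eval-apply template: given evaluators $la,op_1,ar_1,op_2,ar_2$ (possibly $ea$ itself), $ea$ is defined by (var) $ea(x)=x$; (abs) $ea(\lambda x.B)=\lambda x.B'$ if $la(B)=B'$; (con) $ea(MN)=B'$ if $op_1(M)=\lambda x.B$, $ar_1(N)=N'$, $ea([N'/x]B)=B'$; (neu) $ea(MN)=M''N'$ if $op_1(M)=M'$, $M'$ not an abstraction, $op_2(M')=M''$, $ar_2(N)=N'$. Uniform evaluator $XYZ\in\{I,S\}^3$: $op_1=ea$, $op_2=\mathrm{id}$, and $la$, $ar_1$, $ar_2$ equal to $ea$ itself when the corresponding letter $X$, $Y$, $Z$ is $S$ and to $\mathrm{id}$ when it is $I$. A strategy $st_2$ absorbs $st_1$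 iff $st_2\circ st_1=st_2$. *)

(* Defs.v *)
(* Lambda terms in de Bruijn representation: alpha-equivalent
   named terms are identified, and beta-substitution [N/x]B is the standard
   capture-avoiding de Bruijn substitution. Free variables are indices that
   point beyond all enclosing binders. *)
From Stdlib Require Import Arith.

Inductive term : Type :=
| Var : nat -> term
| Lam : term -> term
| App : term -> term -> term.

Fixpoint shift (c : nat) (t : term) : term :=
  match t with
  | Var i => if Nat.leb c i then Var (S i) else Var i
  | Lam b => Lam (shift (S c) b)
  | App m n => App (shift c m) (shift c n)
  end.

Fixpoint subst (j : nat) (s : term) (t : term) : term :=
  match t with
  | Var i => if Nat.eqb i j then s
             else if Nat.ltb j i then Var (pred i) else Var i
  | Lam b => Lam (subst (S j) (shift 0 s) b)
  | App m n => App (subst j s m) (subst j s n)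
  end.

(* [N/x]B where B is the body of \x.B *)
Definition beta (B N : term) : term := subst 0 N B.

Definition is_abs (t : term) : Prop :=
  match t with Lam _ => True | _ => False end.

(* An evaluator is a partial function, represented by its graph
   (a relation defined by inference rules; undefined = no derivation). *)
Definition evaluator := term -> term -> Prop.

(* Uniform evaluator XYZ: flags X (la), Y (ar1), Z (ar2); true = S
   (the evaluator itself), false = I (identity). op1 = ea, op2 = id. *)
Inductive uniform (X Y Z : bool) : evaluator :=
| u_var : forall x, uniform X Y Z (Var x) (Var x)
| u_abs_I : forall B, X = false -> uniform X Y Z (Lam B) (Lam B)
| u_abs_S : forall B B', X = true -> uniform X Y Z B B' ->
    uniform X Y Z (Lam B) (Lam B')
| u_con_I : forall M N B B', Y = false ->
    uniform X Y Z M (Lam B) ->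
    uniform X Y Z (beta B N) B' ->
    uniform X Y Z (App M N) B'
| u_con_S : forall M N N' B B', Y = true ->
    uniform X Y Z M (Lam B) ->
    uniform X Y Z N N' ->
    uniform X Y Z (beta B N') B' ->
    uniform X Y Z (App M N) B'
| u_neu_I : forall M N M', Z = false ->
    uniform X Y Z M M' -> ~ is_abs M' ->
    uniform X Y Z (App M N) (App M' N)
| u_neu_S : forall M N M' N', Z = true ->
    uniform X Y Z M M' -> ~ is_abs M' ->
    uniform X Y Z N N' ->
    uniform X Y Z (App M N) (App M' N').

Definition SSS : evaluator := uniform true true true.
Definition ISI : evaluator := uniform false true false.
Definition ISS : evaluator := uniform false true true.
Definition SSI : evaluator := uniform true true false.

Definition compose (st2 st1 : evaluator) : evaluator :=
  fun t v => exists u, st1 t u /\ st2 u v.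

Definition absorbs (st2 st1 : evaluator) : Prop :=
  forall t v, compose st2 st1 t v <-> st2 t v.

(* Main.v *)
Require Import Defs.

Definition w := Lam (App (Var 0) (Var 0)).
Definition Om := App w w.

Lemma var_eval X Y Z n r : uniform X Y Z (Var n) r -> r = Var n.
Proof. intro H. inversion H; subst; auto. Qed.

Ltac kill_var := repeat match goal with
  | H : uniform _ _ _ (Var _) _ |- _ => apply var_eval in H; subst
  end; try discriminate.

Lemma w_eval X Y Z r : uniform X Y Z w r -> r = w.
Proof.
  unfold w; intro H. inversion H; subst; auto.
  match goal with H : uniform _ _ _ (App _ _) _ |- _ => inversion H; subst end;
  kill_var; reflexivity.
Qed.

Lemma om_div X Z r : ~ uniform X true Z Om r.
Proof.
  intro H. remember Om as t eqn:Ht. revert Ht.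
  induction H; intro Ht; unfold Om in Ht; try discriminate; try congruence.
  - injection Ht; intros; subst.
    match goal with H1 : uniform _ _ _ w (Lam _) |- _ => apply w_eval in H1; unfold w in H1; injection H1; intros; subst end.
    match goal with H1 : uniform _ _ _ w N' |- _ => apply w_eval in H1; subst end.
    apply IHuniform3. reflexivity.
  - injection Ht; intros; subst.
    match goal with H1 : uniform _ _ _ w _ |- _ => apply w_eval in H1; subst end.
    match goal with H1 : ~ is_abs _ |- _ => apply H1; exact I end.
  - injection Ht; intros; subst.
    match goal with H1 : uniform _ _ _ w M' |- _ => apply w_eval in H1; subst end.
    match goal with H1 : ~ is_abs _ |- _ => apply H1; exact I end.
Qed.

Lemma app_var_om X Z n r : Z = true -> ~ uniform X true Z (App (Var n) Om) r.
Proof.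
  intros HZ H. inversion H; subst; try congruence; kill_var;
  try (eapply om_div; eassumption).
Qed.

Lemma beta_div X Z B N r : ~ (exists N', uniform X true Z N N') ->
  ~ uniform X true Z (App (Lam B) N) r.
Proof.
  intros Hn H. inversion H; subst; try congruence; try (apply Hn; eauto; fail);
  match goal with H1 : uniform _ _ _ (Lam _) _ |- _ => inversion H1; subst end;
  match goal with H1 : ~ is_abs _ |- _ => apply H1; exact I end.
Qed.

Definition t1 := App (Lam (Var 1)) (Lam (App (Var 0) Om)).
Definition t2 := App (Lam (Var 1)) (App (Var 0) Om).
Definition t3 := App (Lam (Var 1)) (Lam Om).

Lemma ev_t X Z N : uniform X true Z N N -> uniform X true Z (App (Lam (Var 1)) N) (Var 0).
Proof.
  intro HN. destruct X.
  - eapply u_con_S; eauto. apply u_abs_S; auto. apply u_var.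
    apply u_var.
  - eapply u_con_S; eauto. apply u_abs_I; auto. apply u_var.
Qed.

Lemma not_abs_app (X Y Z : bool) st1 st2 t :
  st1 t (Var 0) -> st2 (Var 0) (Var 0) -> ~ st2 t (Var 0) -> ~ absorbs st2 st1.
Proof.
  intros H1 H2 H3 Ha. apply H3. apply Ha. exists (Var 0); auto.
Qed.

Lemma sss_t1 : ~ SSS t1 (Var 0).
Proof.
  apply beta_div. intros [N' HN]. inversion HN; subst; try congruence.
  match goal with H1 : uniform _ _ _ (App _ _) _ |- _ => inversion H1; subst end;
  try congruence; kill_var; eapply om_div; eassumption.
Qed.

Lemma lamI X Z N : X = false -> uniform X true Z (Lam N) (Lam N).
Proof. intro; apply u_abs_I; auto. Qed.

Theorem mainTheorem6 :
  ~ absorbs SSS ISI /\ ~ absorbs SSS ISS /\ ~ absorbs SSS SSI /\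
  ~ absorbs ISS ISI /\ ~ absorbs SSI ISI.
Proof.
  repeat split.
  - apply (not_abs_app true true true ISI SSS t1); [apply ev_t, lamI; auto | apply u_var | apply sss_t1].
  - apply (not_abs_app true true true ISS SSS t1); [apply ev_t, lamI; auto | apply u_var | apply sss_t1].
  - apply (not_abs_app true true true SSI SSS t1); [ | apply u_var | apply sss_t1].
    apply ev_t. apply u_abs_S; auto. apply u_neu_I; [reflexivity | apply u_var | intro HH; exact HH].
  - apply (not_abs_app true true true ISI ISS t2).
    + apply ev_t. apply u_neu_I; [reflexivity | apply u_var | intro HH; exact HH].
    + apply u_var.
    + apply beta_div. intros [N' HN]. eapply app_var_om; eauto.
  - apply (not_abs_app true true true ISI SSI t3); [apply ev_t, lamI; auto | apply u_var | ].
    apply beta_div. intros [N' HN]. inversion HN; subst; try congruence.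
    eapply om_div; eassumption.
Qed.
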